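(* Let $E$ be the elliptic curve over $\mathbb{Q}$ given by $y^2 = x^3+x^2+x+1$, and let $\rho_{E,4}\colon \mathrm{Gal}(\overline{\mathbb{Q}}/\mathbb{Q}) \to \mathrm{GL}_2(\mathbb{Z}/4\mathbb{Z})$ be the representation on its $4$-torsion $E[4]$. Then $\rho_{E,4} \cong \rho$, where $\rho$ is defined as follows: let $K := \mathbb{Q}(i,\sqrt2,\sqrt{1+i})$, a Galois extension of $\mathbb{Q}$, identify $\mathrm{Gal}(K/\mathbb{Q})$ with $D_4 = \langle r,s \mid r^4=s^2=1,\ srs=r^{-1}\rangle$ via the automorphisms $r,s$ determined by $s(i)=i$, $s(\sqrt2)=-\sqrt2$, $s(\sqrt{1+i})=\sqrt{1+i}$, $r(i)=-i$, $r(\sqrt2)=-\sqrt2$, $r(\sqrt{1+i}) = \frac{1-i}{\sqrt2}\sqrt{1+i}$, and let $\rho$ be the composite of the natural surjection $\mathrm{Gal}(\overline{\mathbb{Q}}/\mathbb{Q}) \twoheadrightarrow \mathrm{Gal}(K/\mathbb{Q}) \cong D_4$ with the embedding $D_4 \hookrightarrow \mathrm{GL}_2(\mathbb{Z}/4\mathbb{Z})$ given by $r \mapsto \begin{pmatrix}1&2\\1&1\end{pmatrix}$, $s \mapsto \begin{pmatrix}-1&2\\2&-1\end{pmatrix}$. *)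

(* Defs.v *)
From HB Require Import structures.
From mathcomp Require Import all_boot all_algebra all_field.
Set Implicit Arguments. Unset Strict Implicit. Unset Printing Implicit Defensive.
Import GRing.Theory Num.Theory.
Local Open Scope ring_scope.

(* Points of E : y^2 = x^3 + x^2 + x + 1 over Qbar = algC;
   None is the point at infinity O. *)
Definition ec_pt := option (algC * algC).

Definition on_E (P : ec_pt) : bool :=
  match P with
  | None => true
  | Some (x, y) => y ^+ 2 == x ^+ 3 + x ^+ 2 + x + 1
  end.

(* Chord-tangent group law for y^2 = x^3 + a2 x^2 + a4 x + a6 with
   a2 = a4 = a6 = 1. *)
Definition ec_add (P Q : ec_pt) : ec_pt :=
  match P, Q with
  | None, _ => Q
  | _, None => P
  | Some (x1, y1), Some (x2, y2) =>
      if (x1 == x2) && (y1 == - y2) then None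
      else
        let l := if x1 == x2 then (3 * x1 ^+ 2 + 2 * x1 + 1) / (2 * y1)
                 else (y2 - y1) / (x2 - x1) in
        let x3 := l ^+ 2 - 1 - x1 - x2 in
        Some (x3, - (l * (x3 - x1) + y1))
  end.

Definition ec_mul (n : nat) (P : ec_pt) : ec_pt := iter n (ec_add P) None.

Definition ec_map (f : algC -> algC) (P : ec_pt) : ec_pt :=
  omap (fun p => (f p.1, f p.2)) P.

Definition E4 (P : ec_pt) : bool := on_E P && (ec_mul 4 P == None).

Definition E4_basis (P Q : ec_pt) : Prop :=
  E4 P /\ E4 Q /\
  forall T, E4 T ->
    exists! ac : 'I_4 * 'I_4,
      T = ec_add (ec_mul ac.1 P) (ec_mul ac.2 Q).

Definition sqrt2 : algC := sqrtC 2.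
Definition sqrt1i : algC := sqrtC (1 + 'i).

(* lifts to Aut(Qbar) of r and s in Gal(K/Q) *)
Definition is_r (f : algC -> algC) : Prop :=
  f 'i = - 'i /\ f sqrt2 = - sqrt2 /\ f sqrt1i = (1 - 'i) / sqrt2 * sqrt1i.
Definition is_s (f : algC -> algC) : Prop :=
  f 'i = 'i /\ f sqrt2 = - sqrt2 /\ f sqrt1i = sqrt1i.

(* two automorphisms agree on K (= agree on its generators) *)
Definition agree_on_K (f g : algC -> algC) : Prop :=
  f 'i = g 'i /\ f sqrt2 = g sqrt2 /\ f sqrt1i = g sqrt1i.

Definition Mr : 'M['Z_4]_2 :=
  \matrix_(i < 2, j < 2)
    (if i == 0 :> nat then (if j == 0 :> nat then 1 else 2%:R)
     else 1).
Definition Ms : 'M['Z_4]_2 :=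
  \matrix_(i < 2, j < 2) (if i == j then -1 else 2%:R).

(* sigma acts on the basis (P, Q) by the matrix M (columns = images):
   sigma(P) = M00 P + M10 Q, sigma(Q) = M01 P + M11 Q *)
Definition acts_by (f : algC -> algC) (P Q : ec_pt) (M : 'M['Z_4]_2) : Prop :=
  ec_map f P = ec_add (ec_mul (M 0 0) P) (ec_mul (M 1 0) Q) /\
  ec_map f Q = ec_add (ec_mul (M 0 1) P) (ec_mul (M 1 1) Q).

(* Main.v *)
Require Import Defs.
From HB Require Import structures.
From mathcomp Require Import all_boot all_algebra all_field.
From mathcomp Require Import ring.
Import GRing.Theory Num.Theory.
Set Implicit Arguments. Unset Strict Implicit.
Local Open Scope ring_scope.

Lemma ext_mul (R : comRingType) (a b c d g : R) :
  (a + b * g) * (c + d * g) = (a * c + b * d * g ^+ 2) + (a * d + b * c) * g.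
Proof. ring. Qed.

Definition Q1 := (rat * rat)%type.
Definition add1 (x y : Q1) : Q1 := (x.1 + y.1, x.2 + y.2).
Definition opp1 (x : Q1) : Q1 := (- x.1, - x.2).
Definition mul1 (x y : Q1) : Q1 := (x.1 * y.1 - x.2 * y.2, x.1 * y.2 + x.2 * y.1).
Definition ev1 (x : Q1) : algC := ratr x.1 + ratr x.2 * 'i.
Definition inv1 (x : Q1) : Q1 :=
  let n := x.1 * x.1 + x.2 * x.2 in (x.1 / n, - x.2 / n).
Definition c1 (q : rat) : Q1 := (q, 0).

Lemma ev1_add x y : ev1 (add1 x y) = ev1 x + ev1 y.
Proof. rewrite /ev1 /= !rmorphD /=; ring. Qed.
Lemma ev1_opp x : ev1 (opp1 x) = - ev1 x.
Proof. rewrite /ev1 /= !rmorphN /=; ring. Qed.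
Lemma ev1_mul x y : ev1 (mul1 x y) = ev1 x * ev1 y.
Proof. rewrite /ev1 ext_mul sqrCi /= !(rmorphD, rmorphN, rmorphM) /=; ring. Qed.
Lemma ev1_c q : ev1 (c1 q) = ratr q.
Proof. by rewrite /ev1 /= rmorph0 mul0r addr0. Qed.

Definition Q2 := (Q1 * Q1)%type.
Definition add2 (x y : Q2) : Q2 := (add1 x.1 y.1, add1 x.2 y.2).
Definition opp2 (x : Q2) : Q2 := (opp1 x.1, opp1 x.2).
Definition mul2 (x y : Q2) : Q2 :=
  (add1 (mul1 x.1 y.1) (mul1 (c1 2%:Q) (mul1 x.2 y.2)), add1 (mul1 x.1 y.2) (mul1 x.2 y.1)).
Definition ev2 (x : Q2) : algC := ev1 x.1 + ev1 x.2 * sqrt2.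
Definition inv2 (x : Q2) : Q2 :=
  let n := inv1 (add1 (mul1 x.1 x.1) (opp1 (mul1 (c1 2%:Q) (mul1 x.2 x.2)))) in
  (mul1 x.1 n, opp1 (mul1 x.2 n)).
Definition c2 (q : Q1) : Q2 := (q, c1 0).

Lemma sqrt2_sq : sqrt2 ^+ 2 = 2.
Proof. exact: sqrtCK. Qed.
Lemma sqrt1i_sq : sqrt1i ^+ 2 = 1 + 'i.
Proof. exact: sqrtCK. Qed.

Lemma ev2_add x y : ev2 (add2 x y) = ev2 x + ev2 y.
Proof. rewrite /ev2 /= !ev1_add; ring. Qed.
Lemma ev2_opp x : ev2 (opp2 x) = - ev2 x.
Proof. rewrite /ev2 /= !ev1_opp; ring. Qed.
Lemma ev2_mul x y : ev2 (mul2 x y) = ev2 x * ev2 y.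
Proof.
rewrite /ev2 ext_mul sqrt2_sq /= !ev1_add !ev1_mul ev1_c rmorph_nat; ring.
Qed.
Lemma ev2_c q : ev2 (c2 q) = ev1 q.
Proof. by rewrite /ev2 /= ev1_c rmorph0 mul0r addr0. Qed.

Definition Kc := (Q2 * Q2)%type.
Definition addK (x y : Kc) : Kc := (add2 x.1 y.1, add2 x.2 y.2).
Definition oppK (x : Kc) : Kc := (opp2 x.1, opp2 x.2).
Definition subK x y := addK x (oppK y).
Definition delta : Q2 := c2 (1, 1).
Definition mulK (x y : Kc) : Kc :=
  (add2 (mul2 x.1 y.1) (mul2 delta (mul2 x.2 y.2)), add2 (mul2 x.1 y.2) (mul2 x.2 y.1)).
Definition ev (x : Kc) : algC := ev2 x.1 + ev2 x.2 * sqrt1i.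
Definition invK (x : Kc) : Kc :=
  let n := inv2 (add2 (mul2 x.1 x.1) (opp2 (mul2 delta (mul2 x.2 x.2)))) in
  (mul2 x.1 n, opp2 (mul2 x.2 n)).
Definition cK (q : rat) : Kc := (c2 (c1 q), c2 (c1 0)).
Definition zeroK := cK 0.
Definition oneK := cK 1.

Lemma ev_add x y : ev (addK x y) = ev x + ev y.
Proof. rewrite /ev /= !ev2_add; ring. Qed.
Lemma ev_opp x : ev (oppK x) = - ev x.
Proof. rewrite /ev /= !ev2_opp; ring. Qed.
Lemma ev_sub x y : ev (subK x y) = ev x - ev y.
Proof. by rewrite /subK ev_add ev_opp. Qed.
Lemma ev_mul x y : ev (mulK x y) = ev x * ev y.
Proof.
rewrite /ev ext_mul sqrt1i_sq /= !ev2_add !ev2_mul ev2_c /ev1 /= !rmorph1; ring.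
Qed.
Lemma ev_c q : ev (cK q) = ratr q.
Proof. by rewrite /ev /= !ev2_c !ev1_c rmorph0 mul0r addr0. Qed.

Definition certK (z : Kc) : bool := mulK z (invK z) == oneK.

Lemma ev_inv z : certK z -> ev (invK z) = (ev z)^-1.
Proof.
move/eqP=> h; apply/esym/mulr1_eq; by rewrite -ev_mul h ev_c rmorph1.
Qed.
Lemma ev_neq0 z : certK z -> ev z != 0.
Proof.
move/eqP=> h; apply/negP => /eqP e.
have := congr1 ev h; rewrite ev_mul e mul0r ev_c rmorph1 => /eqP.
by rewrite eq_sym oner_eq0.
Qed.
Arguments ev_neq0 {z}. Arguments ev_inv {z}.

Definition ptK := option (Kc * Kc).
Definition evP (p : ptK) : ec_pt := omap (fun q => (ev q.1, ev q.2)) p.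

Definition certNe (a b : Kc) : bool := (a == b) || certK (subK a b).

Lemma eq_dec a b : certNe a b -> (ev a == ev b) = (a == b).
Proof.
case/orP=> [/eqP -> | c]; first by rewrite !eqxx.
case: (eqVneq a b) => [->|_]; first by rewrite eqxx.
by apply/negbTE; move: (ev_neq0 c); rewrite ev_sub subr_eq0.
Qed.

Definition slope_t (x1 y1 : Kc) : Kc :=
  mulK (addK (addK (mulK (cK 3%:R) (mulK x1 x1)) (mulK (cK 2%:R) x1)) oneK)
       (invK (mulK (cK 2%:R) y1)).

Definition addKc (P Q : ptK) : ptK :=
  match P, Q with
  | None, _ => Q
  | _, None => P
  | Some (x1, y1), Some (x2, y2) =>
      if (x1 == x2) && (y1 == oppK y2) then None
      else
        let l := if x1 == x2 then slope_t x1 y1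
                 else mulK (subK y2 y1) (invK (subK x2 x1)) in
        let x3 := subK (subK (subK (mulK l l) oneK) x1) x2 in
        Some (x3, oppK (addK (mulK l (subK x3 x1)) y1))
  end.

Definition okAdd (P Q : ptK) : bool :=
  match P, Q with
  | Some (x1, y1), Some (x2, y2) =>
     certNe x1 x2 &&
     (if x1 == x2 then certNe y1 (oppK y2) && ((y1 == oppK y2) || certK (mulK (cK 2%:R) y1))
      else certK (subK x2 x1))
  | _, _ => true
  end.

Lemma addKc_ok P Q : okAdd P Q -> evP (addKc P Q) = ec_add (evP P) (evP Q).
Proof.
case: P => [[x1 y1]|]; case: Q => [[x2 y2]|] //=.
case/andP=> cx; rewrite (eq_dec cx).
case: (eqVneq x1 x2) => [<-|nx] /=.
  case/andP=> cy; rewrite -ev_opp (eq_dec cy).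
  case: (eqVneq y1 (oppK y2)) => //= _ cy2.
  rewrite /slope_t !(ev_add, ev_mul, ev_opp, ev_sub, ev_c, ev_inv cy2) !rmorph_nat rmorph1 -expr2.
  by [].
move=> cs.
rewrite !(ev_add, ev_mul, ev_opp, ev_sub, ev_c, ev_inv cs) rmorph1.
by [].
Qed.

Definition mk (v0 v1 v2 v3 v4 v5 v6 v7 : rat) : Kc :=
  (((v0, v1), (v2, v3)), ((v4, v5), (v6, v7))).
Definition P0 : ptK := (Some ((mk (0)%:Q (- 1%:Q) (0)%:Q (0)%:Q (0)%:Q (0)%:Q (0)%:Q (1)%:Q), (mk (0)%:Q (- 2%:Q) (0)%:Q (0)%:Q (0)%:Q (0)%:Q (1)%:Q (1)%:Q))).
Definition Q0 : ptK := (Some ((mk (- 1%:Q) (0)%:Q (1)%:Q (0)%:Q (0)%:Q (0)%:Q (0)%:Q (0)%:Q), (mk (0)%:Q (0)%:Q (0)%:Q (0)%:Q (- 1%:Q) (- 1%:Q) (0)%:Q (1)%:Q))).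
Definition Lpts : seq ptK := [:: None; (Some ((mk (- 1%:Q) (0)%:Q (0)%:Q (0)%:Q (0)%:Q (0)%:Q (0)%:Q (0)%:Q), (mk (0)%:Q (0)%:Q (0)%:Q (0)%:Q (0)%:Q (0)%:Q (0)%:Q (0)%:Q))); (Some ((mk (0)%:Q (1)%:Q (0)%:Q (0)%:Q (0)%:Q (0)%:Q (0)%:Q (0)%:Q), (mk (0)%:Q (0)%:Q (0)%:Q (0)%:Q (0)%:Q (0)%:Q (0)%:Q (0)%:Q))); (Some ((mk (0)%:Q (- 1%:Q) (0)%:Q (0)%:Q (0)%:Q (0)%:Q (0)%:Q (0)%:Q), (mk (0)%:Q (0)%:Q (0)%:Q (0)%:Q (0)%:Q (0)%:Q (0)%:Q (0)%:Q))); (Some ((mk (- 1%:Q) (0)%:Q (1)%:Q (0)%:Q (0)%:Q (0)%:Q (0)%:Q (0)%:Q), (mk (0)%:Q (0)%:Q (0)%:Q (0)%:Q (1)%:Q (1)%:Q (0)%:Q (- 1%:Q)))); (Some ((mk (- 1%:Q) (0)%:Q (1)%:Q (0)%:Q (0)%:Q (0)%:Q (0)%:Q (0)%:Q), (mk (0)%:Q (0)%:Q (0)%:Q (0)%:Q (- 1%:Q) (- 1%:Q) (0)%:Q (1)%:Q))); (Some ((mk (- 1%:Q) (0)%:Q (- 1%:Q) (0)%:Q (0)%:Q (0)%:Q (0)%:Q (0)%:Q), (mk (0)%:Q (0)%:Q (0)%:Q (0)%:Q (1)%:Q (1)%:Q (0)%:Q (1)%:Q))); (Some ((mk (- 1%:Q)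 (0)%:Q (- 1%:Q) (0)%:Q (0)%:Q (0)%:Q (0)%:Q (0)%:Q), (mk (0)%:Q (0)%:Q (0)%:Q (0)%:Q (- 1%:Q) (- 1%:Q) (0)%:Q (- 1%:Q)))); (Some ((mk (0)%:Q (1)%:Q (0)%:Q (0)%:Q (1)%:Q (1)%:Q (0)%:Q (0)%:Q), (mk (0)%:Q (- 2%:Q) (0)%:Q (0)%:Q (0)%:Q (- 2%:Q) (0)%:Q (0)%:Q))); (Some ((mk (0)%:Q (1)%:Q (0)%:Q (0)%:Q (1)%:Q (1)%:Q (0)%:Q (0)%:Q), (mk (0)%:Q (2)%:Q (0)%:Q (0)%:Q (0)%:Q (2)%:Q (0)%:Q (0)%:Q))); (Some ((mk (0)%:Q (1)%:Q (0)%:Q (0)%:Q (- 1%:Q) (- 1%:Q) (0)%:Q (0)%:Q), (mk (0)%:Q (2)%:Q (0)%:Q (0)%:Q (0)%:Q (- 2%:Q) (0)%:Q (0)%:Q))); (Some ((mk (0)%:Q (1)%:Q (0)%:Q (0)%:Q (- 1%:Q) (- 1%:Q) (0)%:Q (0)%:Q), (mk (0)%:Q (- 2%:Q) (0)%:Q (0)%:Q (0)%:Q (2)%:Q (0)%:Q (0)%:Q))); (Some ((mk (0)%:Q (- 1%:Q) (0)%:Q (0)%:Q (0)%:Q (0)%:Q (0)%:Q (1)%:Q), (mk (0)%:Q (- 2%:Q) (0)%:Q (0)%:Q (0)%:Q (0)%:Q (1)%:Q (1)%:Q))); (Some ((mk (0)%:Q (- 1%:Q) (0)%:Q (0)%:Q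 (0)%:Q (0)%:Q (0)%:Q (1)%:Q), (mk (0)%:Q (2)%:Q (0)%:Q (0)%:Q (0)%:Q (0)%:Q (- 1%:Q) (- 1%:Q)))); (Some ((mk (0)%:Q (- 1%:Q) (0)%:Q (0)%:Q (0)%:Q (0)%:Q (0)%:Q (- 1%:Q)), (mk (0)%:Q (2)%:Q (0)%:Q (0)%:Q (0)%:Q (0)%:Q (1)%:Q (1)%:Q))); (Some ((mk (0)%:Q (- 1%:Q) (0)%:Q (0)%:Q (0)%:Q (0)%:Q (0)%:Q (- 1%:Q)), (mk (0)%:Q (- 2%:Q) (0)%:Q (0)%:Q (0)%:Q (0)%:Q (- 1%:Q) (- 1%:Q))))].
Definition xs6 : seq Kc := [:: (mk (- 1%:Q) (0)%:Q (1)%:Q (0)%:Q (0)%:Q (0)%:Q (0)%:Q (0)%:Q); (mk (- 1%:Q) (0)%:Q (- 1%:Q) (0)%:Q (0)%:Q (0)%:Q (0)%:Q (0)%:Q); (mk (0)%:Q (1)%:Q (0)%:Q (0)%:Q (1)%:Q (1)%:Q (0)%:Q (0)%:Q); (mk (0)%:Q (1)%:Q (0)%:Q (0)%:Q (- 1%:Q) (- 1%:Q) (0)%:Q (0)%:Q); (mk (0)%:Q (- 1%:Q) (0)%:Q (0)%:Q (0)%:Q (0)%:Q (0)%:Q (1)%:Q); (mk (0)%:Q (- 1%:Q) (0)%:Q (0)%:Q (0)%:Q (0)%:Q (0)%:Q (- 1%:Q))].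
Definition ys6 : seq Kc := [:: (mk (0)%:Q (0)%:Q (0)%:Q (0)%:Q (1)%:Q (1)%:Q (0)%:Q (- 1%:Q)); (mk (0)%:Q (0)%:Q (0)%:Q (0)%:Q (1)%:Q (1)%:Q (0)%:Q (1)%:Q); (mk (0)%:Q (- 2%:Q) (0)%:Q (0)%:Q (0)%:Q (- 2%:Q) (0)%:Q (0)%:Q); (mk (0)%:Q (2)%:Q (0)%:Q (0)%:Q (0)%:Q (- 2%:Q) (0)%:Q (0)%:Q); (mk (0)%:Q (- 2%:Q) (0)%:Q (0)%:Q (0)%:Q (0)%:Q (1)%:Q (1)%:Q); (mk (0)%:Q (2)%:Q (0)%:Q (0)%:Q (0)%:Q (0)%:Q (1)%:Q (1)%:Q)].

Definition mulKc (n : nat) (P : ptK) : ptK := iter n (addKc P) None.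
Fixpoint okMul (n : nat) (P : ptK) : bool :=
  if n is n'.+1 then okMul n' P && okAdd P (mulKc n' P) else true.

Lemma mulKc_ok n P : okMul n P -> evP (mulKc n P) = ec_mul n (evP P).
Proof.
elim: n => //= n IH /andP[h1 h2].
by rewrite addKc_ok // IH.
Qed.

Definition comboK (a c : nat) : ptK := addKc (mulKc a P0) (mulKc c Q0).
Definition okCombo (a c : nat) : bool :=
  okMul a P0 && okMul c Q0 && okAdd (mulKc a P0) (mulKc c Q0).
Definition pairs4 : seq (nat * nat) := [seq (a, c) | a <- iota 0 4, c <- iota 0 4].

Lemma all_okCombo : all (fun ac => okCombo ac.1 ac.2) pairs4.
Proof. vm_compute. reflexivity. Qed.

Definition act1 (gi : Kc) (x : Q1) : Kc := addK (cK x.1) (mulK (cK x.2) gi).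
Definition act2 gi g2 (x : Q2) : Kc := addK (act1 gi x.1) (mulK (act1 gi x.2) g2).
Definition actK gi g2 ga (x : Kc) : Kc := addK (act2 gi g2 x.1) (mulK (act2 gi g2 x.2) ga).
Definition actP gi g2 ga (p : ptK) : ptK :=
  omap (fun q => (actK gi g2 ga q.1, actK gi g2 ga q.2)) p.

Definition evg (i s a : algC) (z : Kc) : algC :=
  (ratr z.1.1.1 + ratr z.1.1.2 * i + (ratr z.1.2.1 + ratr z.1.2.2 * i) * s) +
  (ratr z.2.1.1 + ratr z.2.1.2 * i + (ratr z.2.2.1 + ratr z.2.2.2 * i) * s) * a.

Lemma ev_evg z : ev z = evg 'i sqrt2 sqrt1i z.
Proof. by []. Qed.

Lemma f_evg (f : {rmorphism algC -> algC}) i s a z :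
  f (evg i s a z) = evg (f i) (f s) (f a) z.
Proof.
have fratM q w : f (ratr q * w) = ratr q * f w by rewrite rmorphM fmorph_rat.
by rewrite /evg !(rmorphD, (rmorphM f (_ + _)), fratM, fmorph_rat).
Qed.

Lemma act_ok (f : {rmorphism algC -> algC}) gi g2 ga :
  f 'i = ev gi -> f sqrt2 = ev g2 -> f sqrt1i = ev ga ->
  forall z, f (ev z) = ev (actK gi g2 ga z).
Proof.
move=> hi h2 ha z.
rewrite ev_evg f_evg hi h2 ha.
by rewrite /actK /act2 /act1 /= !(ev_add, ev_mul, ev_c).
Qed.

Lemma actP_ok (f : {rmorphism algC -> algC}) gi g2 ga :
  f 'i = ev gi -> f sqrt2 = ev g2 -> f sqrt1i = ev ga ->
  forall p, ec_map f (evP p) = evP (actP gi g2 ga p).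
Proof.
move=> hi h2 ha [[x y]|] //=.
by rewrite !(act_ok hi h2 ha).
Qed.

Lemma iter_ev (f : algC -> algC) (h : Kc -> Kc) :
  (forall z, f (ev z) = ev (h z)) -> forall n z, iter n f (ev z) = ev (iter n h z).
Proof. by move=> H; elim=> //= n IH z; rewrite IH H. Qed.

Lemma iter_mod (h : Kc -> Kc) k n z : iter k h z = z -> iter n h z = iter (n %% k)%N h z.
Proof.
move=> H; rewrite {1}(divn_eq n k) addnC iterD; congr (iter _ h _).
elim: (n %/ k)%N => //= q IH.
by rewrite mulSn iterD IH.
Qed.

Definition Ik := mk 0 1 0 0 0 0 0 0.
Definition S2k := mk 0 0 1 0 0 0 0 0.
Definition Ak := mk 0 0 0 0 1 0 0 0.
Definition rga := mk 0 0 0 0 0 0 (2%:R^-1) (- 2%:R^-1).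

Lemma ev_mk a b c d e g h k :
  ev (mk a b c d e g h k) =
  ratr a + ratr b * 'i + (ratr c + ratr d * 'i) * sqrt2 +
  (ratr e + ratr g * 'i + (ratr h + ratr k * 'i) * sqrt2) * sqrt1i.
Proof. by []. Qed.

Lemma evIk : ev Ik = 'i.
Proof. rewrite /Ik ev_mk !(rmorph0, rmorph1) !(mul0r, mulr0, addr0, add0r, mul1r). by []. Qed.
Lemma evS2k : ev S2k = sqrt2.
Proof. by rewrite /S2k ev_mk !(rmorph0, rmorph1) !(mul0r, mulr0, addr0, add0r, mul1r). Qed.
Lemma evAk : ev Ak = sqrt1i.
Proof. by rewrite /Ak ev_mk !(rmorph0, rmorph1) !(mul0r, mulr0, addr0, add0r, mul1r). Qed.

Lemma sqrt2_neq0 : sqrt2 != 0.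
Proof.
apply/negP => /eqP h; have := sqrt2_sq; rewrite h expr0n /= => /eqP.
by rewrite eq_sym pnatr_eq0.
Qed.


Lemma sqrt2_inv : sqrt2 ^-1 = sqrt2 / 2.
Proof.
apply: (mulfI sqrt2_neq0); rewrite divff ?sqrt2_neq0 // mulrA -expr2 sqrt2_sq divff //.
by rewrite pnatr_eq0.
Qed.

Lemma evrga : ev rga = (1 - 'i) / sqrt2 * sqrt1i.
Proof.
rewrite /rga ev_mk !rmorph0 rmorphN !fmorphV !rmorph_nat sqrt2_inv.
rewrite !(mul0r, add0r, addr0, mulr0).
ring.
Qed.

Lemma mul2E (A B : 'M['Z_4]_2) i j : (A * B) i j = A i 0 * B 0 j + A i 1 * B 1 j.
Proof.
rewrite [A * B]/(A *m B) mxE !big_ord_recl big_ord0 addr0.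
have -> : (lift ord0 ord0 : 'I_2) = 1 by apply/val_inj.
by [].
Qed.

Lemma Mr4 : Mr ^+ 4 = 1.
Proof.
apply/matrixP => i j; rewrite !exprS expr0 mulr1 !mul2E !mxE.
case: i => [[|[|//]] ?]; case: j => [[|[|//]] ?]; apply/eqP; vm_compute; reflexivity.
Qed.
Lemma Ms2 : Ms ^+ 2 = 1.
Proof.
apply/matrixP => i j; rewrite !exprS expr0 mulr1 !mul2E !mxE.
case: i => [[|[|//]] ?]; case: j => [[|[|//]] ?]; apply/eqP; vm_compute; reflexivity.
Qed.

Lemma okCombo_all a c : (a < 4)%N -> (c < 4)%N -> okCombo a c.
Proof.
by case: a => [|[|[|[|//]]]]; case: c => [|[|[|[|//]]]] => _ _; vm_compute; reflexivity.
Qed.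

Lemma combo_ok a c : (a < 4)%N -> (c < 4)%N ->
  ec_add (ec_mul a (evP P0)) (ec_mul c (evP Q0)) = evP (comboK a c).
Proof.
move=> ha hc; case/andP: (okCombo_all ha hc) => /andP[h1 h2] h3.
by rewrite /comboK addKc_ok // !mulKc_ok.
Qed.

Definition hR := actK (oppK Ik) (oppK S2k) rga.
Definition hS := actK Ik (oppK S2k) Ak.

Lemma r_ok (r : {rmorphism algC -> algC}) : is_r r -> forall z, r (ev z) = ev (hR z).
Proof.
case=> [h1 [h2 h3]]; apply: act_ok.
- by rewrite h1 ev_opp evIk.
- by rewrite h2 ev_opp evS2k.
- by rewrite h3 evrga.
Qed.

Lemma s_ok (s : {rmorphism algC -> algC}) : is_s s -> forall z, s (ev z) = ev (hS z).
Proof.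
case=> [h1 [h2 h3]]; apply: act_ok.
- by rewrite h1 evIk.
- by rewrite h2 ev_opp evS2k.
- by rewrite h3 evAk.
Qed.

Lemma fin (sigma : {rmorphism algC -> algC}) gi g2 ga (M : 'M['Z_4]_2) n00 n10 n01 n11 :
  sigma 'i = ev gi -> sigma sqrt2 = ev g2 -> sigma sqrt1i = ev ga ->
  nat_of_ord (M 0 0) = n00 -> nat_of_ord (M 1 0) = n10 ->
  nat_of_ord (M 0 1) = n01 -> nat_of_ord (M 1 1) = n11 ->
  (actP gi g2 ga P0 == comboK n00 n10) && (actP gi g2 ga Q0 == comboK n01 n11) ->
  acts_by sigma (evP P0) (evP Q0) M.
Proof.
move=> hi h2 ha e00 e10 e01 e11 /andP[/eqP c1 /eqP c2].
rewrite /acts_by !(actP_ok hi h2 ha) !combo_ok ?ltn_ord // e00 e10 e01 e11 c1 c2.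
by [].
Qed.

Lemma Q4i b : (b < 2)%N -> iter 4 hR (iter b hS Ik) == iter b hS Ik.
Proof. by case: b => [|[|//]] _; vm_compute. Qed.
Lemma Q42 b : (b < 2)%N -> iter 4 hR (iter b hS S2k) == iter b hS S2k.
Proof. by case: b => [|[|//]] _; vm_compute. Qed.
Lemma Q4a b : (b < 2)%N -> iter 4 hR (iter b hS Ak) == iter b hS Ak.
Proof. by case: b => [|[|//]] _; vm_compute. Qed.

Lemma galois_ok (r s sigma : {rmorphism algC -> algC}) (a b : nat) :
  is_r r -> is_s s ->
  agree_on_K sigma (fun x => iter a r (iter b s x)) ->
  acts_by sigma (evP P0) (evP Q0) (Mr ^+ a * Ms ^+ b).
Proof.
move=> hr hs [ei [e2 ea]].
have It g : iter a r (iter b s (ev g)) = ev (iter a hR (iter b hS g)).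
  by rewrite (iter_ev (s_ok hs)) (iter_ev (r_ok hr)).
have {}ei : sigma 'i = ev (iter a hR (iter b hS Ik)) by rewrite ei -It evIk.
have {}e2 : sigma sqrt2 = ev (iter a hR (iter b hS S2k)) by rewrite e2 -It evS2k.
have {}ea : sigma sqrt1i = ev (iter a hR (iter b hS Ak)) by rewrite ea -It evAk.
have P2 g : g \in [:: Ik; S2k; Ak] -> iter b hS g = iter (b %% 2)%N hS g.
  move=> gin; apply: iter_mod.
  by move: gin; rewrite !inE => /or3P[] /eqP ->; apply/eqP; vm_compute.
rewrite (P2 Ik) ?inE ?eqxx // in ei.
rewrite (P2 S2k) ?inE ?eqxx ?orbT // in e2.
rewrite (P2 Ak) ?inE ?eqxx ?orbT // in ea.
have -> : Ms ^+ b = Ms ^+ (b %% 2)%N.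
  by rewrite {1}(divn_eq b 2) exprD mulnC exprM Ms2 expr1n mul1r.
have -> : Mr ^+ a = Mr ^+ (a %% 4)%N.
  by rewrite {1}(divn_eq a 4) exprD mulnC exprM Mr4 expr1n mul1r.
have P4 w : iter 4 hR w == w -> iter a hR w = iter (a %% 4)%N hR w.
  by move=> /eqP; apply: iter_mod.
move: ei e2 ea.
move Hb: (b %% 2)%N => b'.
have hb : (b' < 2)%N by rewrite -Hb ltn_mod.
rewrite (P4 _ (Q4i hb)) (P4 _ (Q42 hb)) (P4 _ (Q4a hb)).
move Ha: (a %% 4)%N => a'.
have ha : (a' < 4)%N by rewrite -Ha ltn_mod.
case: b' Hb hb => [|[|//]] _ _.
all: case: a' Ha ha => [|[|[|[|//]]]] _ _.
  - move=> ei e2 ea; apply: (@fin sigma _ _ _ _ 1 0 0 1 ei e2 ea); try by (rewrite ?exprS ?expr0 ?mulr1 ?mul1r ?mul2E !mxE; vm_compute).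
    by vm_compute.
  - move=> ei e2 ea; apply: (@fin sigma _ _ _ _ 1 1 2 1 ei e2 ea); try by (rewrite ?exprS ?expr0 ?mulr1 ?mul1r ?mul2E !mxE; vm_compute).
    by vm_compute.
  - move=> ei e2 ea; apply: (@fin sigma _ _ _ _ 3 2 0 3 ei e2 ea); try by (rewrite ?exprS ?expr0 ?mulr1 ?mul1r ?mul2E !mxE; vm_compute).
    by vm_compute.
  - move=> ei e2 ea; apply: (@fin sigma _ _ _ _ 3 1 2 3 ei e2 ea); try by (rewrite ?exprS ?expr0 ?mulr1 ?mul1r ?mul2E !mxE; vm_compute).
    by vm_compute.
  - move=> ei e2 ea; apply: (@fin sigma _ _ _ _ 3 2 2 3 ei e2 ea); try by (rewrite ?exprS ?expr0 ?mulr1 ?mul1r ?mul2E !mxE; vm_compute).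
    by vm_compute.
  - move=> ei e2 ea; apply: (@fin sigma _ _ _ _ 3 1 0 1 ei e2 ea); try by (rewrite ?exprS ?expr0 ?mulr1 ?mul1r ?mul2E !mxE; vm_compute).
    by vm_compute.
  - move=> ei e2 ea; apply: (@fin sigma _ _ _ _ 1 0 2 1 ei e2 ea); try by (rewrite ?exprS ?expr0 ?mulr1 ?mul1r ?mul2E !mxE; vm_compute).
    by vm_compute.
  - move=> ei e2 ea; apply: (@fin sigma _ _ _ _ 1 1 0 3 ei e2 ea); try by (rewrite ?exprS ?expr0 ?mulr1 ?mul1r ?mul2E !mxE; vm_compute).
    by vm_compute.
Qed.

Definition fx (x : algC) := x ^+ 3 + x ^+ 2 + x + 1.
Definition fK (X : Kc) : Kc := addK (addK (addK (mulK (mulK X X) X) (mulK X X)) X) oneK.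
Lemma ev_fK X : ev (fK X) = fx (ev X).
Proof. rewrite /fK !(ev_add, ev_mul) ev_c rmorph1 /fx; ring. Qed.

Lemma add_None x1 y1 P : ec_add (Some (x1, y1)) P = None -> P = Some (x1, - y1).
Proof.
case: P => [[x2 y2]|] //=.
case: ifP => // /andP[/eqP <- /eqP ->]. by rewrite opprK.
Qed.

Lemma ysolve X Y y :
  (mulK Y Y == fK X) && (Some (X, Y) \in Lpts) && (Some (X, oppK Y) \in Lpts) ->
  y ^+ 2 = fx (ev X) -> exists2 t, t \in Lpts & Some (ev X, y) = evP t.
Proof.
case/andP=> [/andP[/eqP hY h1] h2] hy.
have : (y - ev Y) * (y + ev Y) = 0.
  have -> : (y - ev Y) * (y + ev Y) = y ^+ 2 - ev Y * ev Y by ring.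
  by rewrite -ev_mul hY ev_fK hy subrr.
move/eqP; rewrite mulf_eq0 => /orP[]; rewrite ?subr_eq0 ?addr_eq0 => /eqP ->.
  by exists (Some (X, Y)).
by exists (Some (X, oppK Y)) => //=; rewrite ev_opp.
Qed.

Definition Pol (x : algC) := - (x ^+ 2 + 2 * x - 1) * ((x ^+ 2 + 1) ^+ 2 + (2 * x + 2) ^+ 2).

Lemma char4 x y : y ^+ 2 = fx x -> ec_mul 4 (Some (x, y)) = None ->
  (y = 0 /\ fx x = 0) \/ Pol x = 0.
Proof.
move=> hc h4.
have e3 : ec_add (Some (x, y)) (ec_add (Some (x, y)) (Some (x, y))) = Some (x, - y).
  exact: (add_None h4).
case: (eqVneq y (- y)) => hy.
  left; have y0 : y = 0.
    have : y *+ 2 = 0 by rewrite mulr2n {1}hy addNr.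
    by move/eqP; rewrite mulrn_eq0 /= => /eqP.
  by split => //; rewrite -hc y0 expr0n.
right.
have y0 : y != 0 by apply: contraNneq hy => ->; rewrite oppr0.
have y20 : 2 * y != 0 by rewrite mulf_neq0 // pnatr_eq0.
move: e3; rewrite [ec_add (Some (x, y)) (Some (x, y))]/= eqxx (negbTE hy) /=.
set m := (3 * x ^+ 2 + 2 * x + 1) / (2 * y).
set xd := m ^+ 2 - 1 - x - x.
set yd := - (m * (xd - x) + y).
have hg : m * (2 * y) = 3 * x ^+ 2 + 2 * x + 1 by rewrite /m divfK.
have key : Pol x = (2 * y) ^+ 3 * (m * (xd - x) + y).
  have -> : Pol x = (3 * x ^+ 2 + 2 * x + 1) ^+ 3
     - 4 * (1 + 3 * x) * (3 * x ^+ 2 + 2 * x + 1) * fx x + 8 * fx x ^+ 2.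
    by rewrite /Pol /fx; ring.
  by rewrite -hg -hc /xd; ring.
move=> e3; rewrite key; apply/eqP; rewrite mulf_eq0 expf_eq0 (negbTE y20) andbF /=.
have hyd : yd = - (m * (xd - x) + y) by [].
have hxd : xd = m ^+ 2 - 1 - x - x by [].
clearbody yd. clearbody xd. clearbody m.
case: (eqVneq x xd) => hx.
  move: e3; rewrite hx eqxx /=; case: ifP => // hn [_ e].
  have X3 : m ^+ 2 - 1 - xd - xd = xd by rewrite {3}hxd hx.
  rewrite hx in hyd; move: e; rewrite X3 -hyd => e.
  by move: hn; rewrite e opprK eqxx.
move: e3; rewrite (negbTE hx) andFb /=; set l := (yd - y) / (xd - x); case=> e1 e2.
have u0 : xd - x != 0 by rewrite subr_eq0 eq_sym.
have hl : l * (xd - x) = yd - y by rewrite /l divfK.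
have lm2 : l ^+ 2 - m ^+ 2 = 0.
  have -> : l ^+ 2 - m ^+ 2 = (l ^+ 2 - 1 - x - xd - x) - (m ^+ 2 - 1 - x - x - xd) by ring.
  by rewrite e1 -hxd !subrr ?subr0.
have lpm : (l + m) * (xd - x) = - (2 * y) by rewrite mulrDl hl hyd; ring.
have lpm0 : l + m != 0.
  apply: contra_neq y20 => h; apply/eqP; rewrite -oppr_eq0 -lpm h mul0r //.
have lEm : l = m.
  apply/eqP; rewrite -subr_eq0; apply/eqP.
  have : (l - m) * (l + m) = 0 by rewrite -lm2; ring.
  by move/eqP; rewrite mulf_eq0 (negbTE lpm0) orbF => /eqP.
have : 2 * (m * (xd - x) + y) = 0.
  have -> : 2 * (m * (xd - x) + y) = m * (xd - x) - (yd - y) by rewrite hyd; ring.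
  by rewrite -hl lEm subrr.
by move/eqP; rewrite mulf_eq0 pnatr_eq0 /=.
Qed.

Lemma quad' X Y x b c : addK X Y == b -> mulK X Y == c ->
  x ^+ 2 - ev b * x + ev c = (x - ev X) * (x - ev Y).
Proof. move=> /eqP <- /eqP <-; rewrite ev_add ev_mul; ring. Qed.

Definition XX k := nth zeroK xs6 k.
Definition YY k := nth zeroK ys6 k.
Definition two_i := mulK (cK 2%:R) Ik.

Lemma ev_two_i : ev two_i = 2 * 'i.
Proof. by rewrite /two_i ev_mul ev_c rmorph_nat evIk. Qed.

Lemma prod0 (a b : algC) : a * b = 0 -> a = 0 \/ b = 0.
Proof. by move/eqP; rewrite mulf_eq0 => /orP[] /eqP; [left|right]. Qed.

Lemma root_lin (x r : algC) : x - r = 0 -> x = r.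
Proof. by move/eqP; rewrite subr_eq0 => /eqP. Qed.

Lemma pol_roots x : Pol x = 0 -> exists2 k, (k < 6)%N & x = ev (XX k).
Proof.
move=> hp.
have e1 := @quad' (XX 0) (XX 1) x (cK (- 2%:R)) (cK (-1)) ltac:(by vm_compute) ltac:(by vm_compute).
have e2 := @quad' (XX 2) (XX 3) x two_i (subK oneK two_i) ltac:(by vm_compute) ltac:(by vm_compute).
have e3 := @quad' (XX 4) (XX 5) x (oppK two_i) (addK oneK two_i) ltac:(by vm_compute) ltac:(by vm_compute).
rewrite !ev_c ?ev_sub ?ev_add ?ev_opp ev_c ?ev_two_i rmorphN rmorph_nat rmorph1 in e1 e2 e3.
have hA : (x ^+ 2 + 1) ^+ 2 + (2 * x + 2) ^+ 2 =
   ((x ^+ 2 + 1) - 'i * (2 * x + 2)) * ((x ^+ 2 + 1) + 'i * (2 * x + 2)).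
  have -> : ((x ^+ 2 + 1) - 'i * (2 * x + 2)) * ((x ^+ 2 + 1) + 'i * (2 * x + 2)) =
     (x ^+ 2 + 1) ^+ 2 - 'i ^+ 2 * (2 * x + 2) ^+ 2 by ring.
  by rewrite sqrCi; ring.
have h1 : x ^+ 2 + 2 * x - 1 = (x - ev (XX 0)) * (x - ev (XX 1)) by rewrite -e1; ring.
have h2 : (x ^+ 2 + 1) - 'i * (2 * x + 2) = (x - ev (XX 2)) * (x - ev (XX 3)) by rewrite -e2; ring.
have h3 : (x ^+ 2 + 1) + 'i * (2 * x + 2) = (x - ev (XX 4)) * (x - ev (XX 5)) by rewrite -e3; ring.
move: hp; rewrite /Pol hA h1 h2 h3 mulNr => /eqP; rewrite oppr_eq0 => /eqP.
case/prod0 => [/prod0 [] /root_lin|/prod0 [] /prod0 [] /root_lin].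
- by exists 0%N.
- by exists 1%N.
- by exists 2%N.
- by exists 3%N.
- by exists 4%N.
- by exists 5%N.
Qed.

Lemma roots3 x : fx x = 0 -> exists2 X, X \in [:: cK (-1); Ik; oppK Ik] & x = ev X.
Proof.
move=> hf.
have e := @quad' Ik (oppK Ik) x zeroK oneK ltac:(by vm_compute) ltac:(by vm_compute).
rewrite !ev_c rmorph0 rmorph1 in e.
have : fx x = (x - ev (cK (-1))) * ((x - ev Ik) * (x - ev (oppK Ik))).
  by rewrite -e ev_c rmorphN rmorph1 /fx; ring.
rewrite hf => /esym /prod0 [/root_lin|/prod0 [] /root_lin] ->.
- by exists (cK (-1)).
- by exists Ik.
- by exists (oppK Ik).
Qed.

Lemma E4_char T : E4 T -> exists2 t, t \in Lpts & T = evP t.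
Proof.
case: T => [[x y]|]; last by exists None.
case/andP => /eqP hc /eqP h4.
have hc' : y ^+ 2 = fx x by [].
case: (char4 hc' h4) => [[y0 hf]|hp].
  have [X hX ex] := roots3 hf.
  rewrite ex in hc'; rewrite ex.
  move: hX; rewrite !inE => /or3P [] /eqP eX; rewrite eX in hc' *;
    by apply: (ysolve (Y := zeroK)) => //; vm_compute.
have [k hk ex] := pol_roots hp.
subst x; clear hp h4; apply: (ysolve (Y := YY k)) => //.
by move: hk; clear hc hc'; case: k => [|[|[|[|[|[|//]]]]]] _; vm_compute.
Qed.

Lemma onE_ok X Y : mulK Y Y == fK X -> on_E (evP (Some (X, Y))).
Proof. by move=> /eqP h /=; apply/eqP; rewrite expr2 -ev_mul h ev_fK. Qed.

Lemma E4_P0 : E4 (evP P0).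
Proof.
apply/andP; split; first by apply: onE_ok; vm_compute.
have h : okMul 4 P0 by vm_compute.
have e : mulKc 4 P0 = None by vm_compute.
by rewrite -(mulKc_ok h) e.
Qed.

Lemma E4_Q0 : E4 (evP Q0).
Proof.
apply/andP; split; first by apply: onE_ok; vm_compute.
have h : okMul 4 Q0 by vm_compute.
have e : mulKc 4 Q0 = None by vm_compute.
by rewrite -(mulKc_ok h) e.
Qed.

Definition ptNe (u v : ptK) : bool :=
  match u, v with
  | None, None => false
  | Some (x, y), Some (x', y') =>
      ((x != x') && certK (subK x x')) || ((y != y') && certK (subK y y'))
  | _, _ => true
  end.

Lemma ptNe_ok u v : ptNe u v -> evP u <> evP v.
Proof.
case: u => [[x y]|]; case: v => [[x' y']|] //= /orP[] /andP[_ c] [ex ey].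
  by move: (ev_neq0 c); rewrite ev_sub ex subrr eqxx.
by move: (ev_neq0 c); rewrite ev_sub ey subrr eqxx.
Qed.

Lemma cover : all (fun t => has (fun ac => (ac.1 < 4)%N && (ac.2 < 4)%N && (comboK ac.1 ac.2 == t)) pairs4) Lpts.
Proof. by vm_compute. Qed.

Lemma distinct : all (fun p => all (fun q => (p == q) || ptNe (comboK p.1 p.2) (comboK q.1 q.2)) pairs4) pairs4.
Proof. by vm_compute. Qed.

Lemma mem_pairs4 a c : (a < 4)%N -> (c < 4)%N -> (a, c) \in pairs4.
Proof. by case: a => [|[|[|[|//]]]]; case: c => [|[|[|[|//]]]]. Qed.

Lemma combo_inj a c a' c' : (a < 4)%N -> (c < 4)%N -> (a' < 4)%N -> (c' < 4)%N ->
  evP (comboK a c) = evP (comboK a' c') -> a = a' /\ c = c'.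
Proof.
move=> ha hc ha' hc' e.
have := allP distinct _ (mem_pairs4 ha hc) => /allP /(_ _ (mem_pairs4 ha' hc')) /orP[].
  by case/eqP => -> ->.
by move/ptNe_ok.
Qed.

Lemma basis : E4_basis (evP P0) (evP Q0).
Proof.
split; first exact: E4_P0.
split; first exact: E4_Q0.
move=> T /E4_char [t ht ->].
have /hasP [[a c] _ hac] := allP cover t ht.
case/andP: hac => /andP [h1 h2] /eqP ht'.
exists (Ordinal h1, Ordinal h2); split.
  by rewrite /= combo_ok // ht'.
move=> [i j] /= e.
rewrite combo_ok ?ltn_ord // -ht' in e.
have [e1 e2] := combo_inj h1 h2 (ltn_ord i) (ltn_ord j) e.
by congr pair; apply: val_inj.
Qed.

Theorem proposition3p9 :
  exists P Q : ec_pt, E4_basis P Q /\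
    forall (r s sigma : {rmorphism algC -> algC}) (a b : nat),
      is_r r -> is_s s ->
      agree_on_K sigma (fun x => iter a r (iter b s x)) ->
      acts_by sigma P Q (Mr ^+ a * Ms ^+ b).
Proof.
exists (evP P0), (evP Q0); split; first exact: basis.
by move=> r s sigma a b hr hs hag; apply: galois_ok hr hs hag.
Qed.
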